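(* Let $G$ be a finite group acting $2$-by-block-transitively on a set $\Omega$, and let $(\omega,\omega')$ be a pair of points in different blocks. Then \[|G(\omega,\omega')| = \frac{|G(\omega)|^2}{|G|-|G([\omega])|};\] in particular the right-hand side is an integer.
   Context: $\Omega$ carries an equivalence relation whose classes are blocks; $[\omega]$ is the block of $\omega$, $G([\omega])$ its setwise stabilizer, $G(\omega)$ the point stabilizer, $G(\omega,\omega')=G(\omega)\cap G(\omega')$. The action is $2$-by-block-transitive if the relation is $G$-invariant, there are at least two blocks, and $G$ is transitive on ordered pairs of points in different blocks. *)

(* Defs.v *)
From mathcomp Require Import all_boot all_order all_algebra all_fingroup.
Set Implicit Arguments. Unset Strict Implicit. Unset Printing Implicit Defensive.

Definition block (T : finType) (e : rel T) (x : T) : {set T} := [set y | e x y].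

Definition is_equiv (T : finType) (e : rel T) : Prop :=
  [/\ reflexive e, symmetric e & transitive e].

Definition two_by_block_transitive (gT : finGroupType) (G : {group gT})
    (T : finType) (to : action G T) (e : rel T) : Prop :=
  [/\ is_equiv e,
      (forall g x y, g \in G -> e (to x g) (to y g) = e x y),
      (exists x y, ~~ e x y) &
      (forall x y x' y', ~~ e x y -> ~~ e x' y' ->
         exists2 g, g \in G & to x g = x' /\ to y g = y')].

(* Main.v *)
Require Import Defs.
From mathcomp Require Import all_boot all_order all_algebra all_fingroup.
From mathcomp Require Import ring.
Import GRing.Theory Num.Theory.

Section Helpers.
Local Open Scope group_scope.
Variables (gT : finGroupType) (G : {group gT}) (T : finType) (to : action G T).

Lemma memC (A : {set gT}) x a : a \in 'C_A[x | to] = [&& a \in A, a \in G & to x a == x].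
Proof. by rewrite !inE sub1set inE. Qed.

Lemma memN (A : {set gT}) (S : {set T}) a : a \in A -> a \in G ->
  (forall x, (to x a \in S) = (x \in S)) -> a \in 'N_A(S | to).
Proof.
move=> aA aG h; rewrite !inE aA aG /=; apply/subsetP=> x; by rewrite inE h.
Qed.

End Helpers.
Arguments memC {gT G T to A x a}.
Arguments memN {gT G T to A S a}.

Theorem corollary2p2 (gT : finGroupType) (G : {group gT}) (T : finType)
    (to : action G T) (e : rel T) (w w' : T) :
  two_by_block_transitive to e -> ~~ e w w' ->
  (#|('N_G(block e w | to))%g| < #|G|)%N /\
  (#|('C_G[w | to] :&: 'C_G[w' | to])%g|%:R : rat)
    = (#|('C_G[w | to])%g|%:R ^+ 2 /
       (#|G| - #|('N_G(block e w | to))%g|)%:R)%R.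
Proof.
Local Open Scope group_scope.
case=> [[erefl esym etrans] einv _ trans] ww'.
set B := block e w.
set Cw := 'C_G[w | to].
set N := 'N_G(B | to).
have orb1 : orbit to Cw w' = ~: B.
  apply/setP=> y; rewrite !inE; apply/idP/idP.
  - case/orbitP=> a; rewrite memC => /and3P[aG _ /eqP aw] <-.
    by rewrite -{1}aw einv.
  - move=> wy; have [g gG [gw gy]] := trans _ _ _ _ ww' wy.
    by apply/orbitP; exists g => //; rewrite memC gG gw eqxx.
have eq1 : (#|~: B| * #|'C_Cw[w' | to]|)%N = #|Cw|.
  by rewrite -orb1 card_orbit_in_stab // subsetIl.
have CI : 'C_Cw[w' | to] = 'C_G[w | to] :&: 'C_G[w' | to].
  apply/setP=> a; rewrite !memC inE !memC; by case: (a \in G).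
have orb2 : orbit to G w = setT.
  apply/setP=> y; rewrite inE; apply/orbitP.
  case ewy: (e w y).
    have [g gG [gw gy]] := trans _ _ _ _ ww' ww'.
    have ny : ~~ e y w'.
      apply/negP=> yw'; move/negP: ww'; apply; exact: etrans ewy yw'.
    have [g' g'G [g'w _]] := trans _ _ _ _ ww' ny.
    by exists g'.
  have nyw : ~~ e y w by rewrite esym ewy.
  have [g gG [gw _]] := trans _ _ _ _ ww' nyw.
  by exists g.
have eq2 : (#|T| * #|Cw|)%N = #|G|.
  by rewrite -cardsT -orb2 card_orbit_in_stab.
have orb3 : orbit to N w = B.
  apply/setP=> y; apply/idP/idP.
  - case/orbitP=> a /setIP[_ aN] <-; rewrite (astabs_act _ aN) !inE; exact: erefl.
  - rewrite inE => ewy; apply/orbitP.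
    have ny : ~~ e y w'.
      apply/negP=> yw'; move/negP: ww'; apply; exact: etrans ewy yw'.
    have [g gG [gw gw']] := trans _ _ _ _ ww' ny.
    exists g => //; apply: memN => // x.
    rewrite !inE -(einv g w x gG) gw.
    have eyw : e y w by rewrite esym.
    apply/idP/idP => h; [exact: etrans eyw h | exact: etrans ewy h].
have CN : 'C_N[w | to] = Cw.
  apply/setP=> a; rewrite !memC; apply/idP/idP.
    by case/and3P=> /setIP[aG _] _ ->; rewrite aG.
  case/andP=> aG /andP[_ /eqP aw]; rewrite aG aw eqxx andbT.
  rewrite andbT /N; apply: memN => // x; rewrite !inE -{1}aw einv //.
have eq3 : (#|B| * #|Cw|)%N = #|N|.
  by rewrite -orb3 -CN card_orbit_in_stab // subsetIl.
have cB : #|~: B| = (#|T| - #|B|)%N by rewrite cardsCs setCK.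
have Bpos : (0 < #|~: B|)%N by apply/card_gt0P; exists w'; rewrite !inE.
have Cpos : (0 < #|Cw|)%N := cardG_gt0 _.
have diff : (#|G| - #|N|)%N = (#|~: B| * #|Cw|)%N.
  by rewrite -eq2 -eq3 -mulnBl cB.
split.
  rewrite -subn_gt0 diff muln_gt0 Bpos Cpos //.
rewrite diff -CI -eq1 natrM.
have h1 : (#|~: B|%:R : rat) != 0%R by rewrite pnatr_eq0 -lt0n.
have h2 : (#|'C_Cw[w' | to]|%:R : rat) != 0%R.
  by rewrite pnatr_eq0 -lt0n cardG_gt0.
by field; rewrite h1 h2.
Qed.
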